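(* In the setting described in the context, for every $\xi\in\Omega_M$ the set $$\mathcal{F}(\xi):=\Big\{\mu\in\mathbb{H}^p_0:\ \int_{\mathbb{R}^n}F(z+\xi)\,d\mu(z)\le\varepsilon+R(\xi)\Big\}$$ is a non-empty subset of $Y_M$ which is closed in $Y_M$ with respect to the weak* topology of $E^*$.
   Context: $1<p<\infty$; $\Omega\subset\mathbb{R}^N$ open bounded with $|\partial\Omega|=0$; $\mathcal{A}v=\sum_{i=1}^NA^i\partial v/\partial x_i$ with linear $A^i\colon\mathbb{R}^n\to\mathbb{R}^d$, symbol $\mathbb{A}(w)=\sum w_iA^i$ of constant rank on $S^{N-1}$. $\mathbb{H}^p_0$ is the set of probability measures $\mu$ on $\mathbb{R}^n$ with $\int z\,d\mu=0$ that are homogeneous Young measures generated by a sequence $\{V_j\}\subset\mathrm{L}^p(\Omega;\mathbb{R}^n)$ with $\mathcal{A}V_j=0$ and $V_j$ weakly convergent in $\mathrm{L}^p$. $E:=\{g\in C(\mathbb{R}^n):\lim_{|z|\to\infty}g(z)/(1+|z|^p)\text{ exists in }\mathbb{R}\}$ with norm $\|g\|_E=\sup_z|g(z)|/(1+|z|^p)$; probability measures with finite $p$-th moment are regarded as elements of $E^*$. $F\colon\mathbb{R}^n\to[0,\infty]$ is lower semi-continuous with $F(\xi)\ge C|\xi|^p$ for some $C>0$. Define $R(\xi):=\inf_{\nu\in\mathbb{H}^p_0}\int F(z+\xi)\,d\nu(z)$. Fix $\varepsilon>0$ and $M\in\mathbb{N}$, let $\Omega_M:=\{\xi\in\mathbb{R}^n:|\xi|<M,\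 R(\xi)\le M\}$, let $C_M>0$ be a constant such that every $\mu\in\mathbb{H}^p_0$ with $\int F(z+\xi)\,d\mu(z)\le\varepsilon+R(\xi)$ for some $\xi\in\Omega_M$ satisfies $\int|z|^p\,d\mu\le C_M$, and let $Y_M:=\{\mu\in\mathbb{H}^p_0:\int|z|^p\,d\mu(z)\le C_M\}$, equipped with the weak* topology of $E^*$. *)

(* Defs.v *)
From HB Require Import structures.
From mathcomp Require Import all_boot all_order all_algebra.
From mathcomp Require Import all_classical all_reals all_analysis.
Set Implicit Arguments. Unset Strict Implicit. Unset Printing Implicit Defensive.
Import Order.TTheory GRing.Theory Num.Theory.
Import numFieldNormedType.Exports.
Local Open Scope classical_set_scope.
Local Open Scope ring_scope.

Section Setting.
Context {R : realType}.

(** R^k is represented by row vectors 'rV[R]_k with the (product) topology of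
    matrix_topology; measurable structure = Borel sigma-algebra generated by
    the open sets. *)
Definition borel_rV (k : nat) := g_sigma_algebraType (@open 'rV[R]_k).

Definition enorm {k} (v : 'rV[R]_k) : R := Num.sqrt (\sum_i (v ord0 i) ^+ 2).
Definition dotv {k} (u v : 'rV[R]_k) : R := \sum_i u ord0 i * v ord0 i.

Definition evec {k} (i : 'I_k) : 'rV[R]_k := delta_mx ord0 i.

(** lam is the Lebesgue measure on the Borel sets of R^N: the measure of
    every closed box is the product of its side lengths (this determines
    lam uniquely). *)
Definition is_lebesgue {N} (lam : {measure set (borel_rV N) -> \bar R}) :=
  forall a b : 'rV[R]_N, (forall i, a ord0 i <= b ord0 i) ->
    lam [set x : borel_rV N | forall i, a ord0 i <= x ord0 i <= b ord0 i]
    = (\prod_i (b ord0 i - a ord0 i))%:E.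

Definition boundary {N} (O : set 'rV[R]_N) := closure O `\` interior O.

Definition Lp {N k} (lam : {measure set (borel_rV N) -> \bar R})
    (O : set (borel_rV N)) (q : R) (V : borel_rV N -> borel_rV k) :=
  measurable_fun O V /\
  (\int[lam]_(x in O) ((enorm (V x)) `^ q)%:E < +oo)%E.

Definition weakly_conv_Lp {N k} (lam : {measure set (borel_rV N) -> \bar R})
    (O : set (borel_rV N)) (p : R) (V : nat -> borel_rV N -> borel_rV k) :=
  exists V0, Lp lam O p V0 /\
    forall W : borel_rV N -> borel_rV k, Lp lam O (p / (p - 1)) W ->
      (fun j => Rintegral lam O (fun x => dotv (V j x) (W x)))
        @ \oo --> Rintegral lam O (fun x => dotv (V0 x) (W x)).

Fixpoint iter_partial {N d} (s : seq 'I_N) (phi : 'rV[R]_N -> 'rV[R]_d)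
  : 'rV[R]_N -> 'rV[R]_d :=
  match s with
  | [::] => phi
  | i :: s' => fun x => 'D_(evec i) (iter_partial s' phi) x
  end.

Definition test_fun {N d} (O : set 'rV[R]_N) (phi : 'rV[R]_N -> 'rV[R]_d) :=
  (forall s : seq 'I_N, continuous (iter_partial s phi) /\
     forall i x, derivable (iter_partial s phi) x (evec i)) /\
  exists K : set 'rV[R]_N, compact K /\ K `<=` O /\
     forall x, ~ K x -> phi x = 0.

(** The first order operator A v = sum_i A^i dv/dx_i, with A^i : R^n -> R^d
    linear, represented by the matrices A i acting on row vectors
    (v |-> v *m A i).  A V = 0 in the sense of distributions on O. *)
Definition A_free {N n d} (lam : {measure set (borel_rV N) -> \bar R})
    (O : set (borel_rV N)) (A : 'I_N -> 'M[R]_(n, d))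
    (V : borel_rV N -> borel_rV n) :=
  forall phi : 'rV[R]_N -> 'rV[R]_d, test_fun O phi ->
    Rintegral lam O
      (fun x => \sum_i dotv (V x *m A i) ('D_(evec i) phi x)) = 0.

Definition symbol {N n d} (A : 'I_N -> 'M[R]_(n, d)) (w : 'rV[R]_N)
  : 'M[R]_(n, d) := \sum_i w ord0 i *: A i.
Definition constant_rank {N n d} (A : 'I_N -> 'M[R]_(n, d)) :=
  exists r : nat, forall w : 'rV[R]_N, enorm w = 1 -> \rank (symbol A w) = r.

Definition vanishes_at_infty {n} (phi : 'rV[R]_n -> R) :=
  forall e : R, 0 < e -> exists r : R, forall z, r < enorm z -> `|phi z| < e.

(** the sequence V generates the homogeneous Young measure mu:
    phi(V_j) -> int phi dmu weakly* in L^oo(O) for every phi in C_0(R^n) *)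
Definition generates_hom_YM {N n} (lam : {measure set (borel_rV N) -> \bar R})
    (O : set (borel_rV N)) (V : nat -> borel_rV N -> borel_rV n)
    (mu : probability (borel_rV n) R) :=
  forall phi : 'rV[R]_n -> R, continuous phi -> vanishes_at_infty phi ->
  forall g : borel_rV N -> R, measurable_fun O g ->
    lam.-integrable O (fun x => (g x)%:E) ->
    (fun j => Rintegral lam O (fun x => g x * phi (V j x)))
      @ \oo --> Rintegral lam O g * Rintegral mu setT phi.

Definition Hp0 {N n d} (p : R) (lam : {measure set (borel_rV N) -> \bar R})
    (O : set (borel_rV N)) (A : 'I_N -> 'M[R]_(n, d))
    (mu : probability (borel_rV n) R) :=
  (forall k : 'I_n, mu.-integrable setT (fun z : borel_rV n => (z ord0 k)%:E) /\
     (\int[mu]_z (z ord0 k)%:E = 0)%E) /\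
  exists V : nat -> borel_rV N -> borel_rV n,
    (forall j, Lp lam O p (V j)) /\ (forall j, A_free lam O A (V j)) /\
    weakly_conv_Lp lam O p V /\ generates_hom_YM lam O V mu.

Definition inE {n} (p : R) (g : 'rV[R]_n -> R) :=
  continuous g /\
  exists L : R, forall e : R, 0 < e -> exists r : R, forall z,
    r < enorm z -> `|g z / (1 + enorm z `^ p) - L| < e.

Definition pairing {n} (mu : probability (borel_rV n) R) (g : 'rV[R]_n -> R)
  : \bar R := (\int[mu]_z (g z)%:E)%E.

(** S is closed in Y for the (subspace topology of the) weak* topology of E^*:
    every element of Y lying in the weak* closure of S belongs to S, where
    the weak* closure is described by the basic weak* neighbourhoods
    {nu : |<nu,g_i> - <mu,g_i>| < delta, i = 1..m}, g_i in E. *)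
Definition weakstar_closed_in {n} (p : R)
    (Y S : set (probability (borel_rV n) R)) :=
  forall mu, Y mu ->
    (forall (gs : seq ('rV[R]_n -> R)) (delta : R),
        (forall g, g \in gs -> inE p g) -> 0 < delta ->
        exists2 nu, S nu & forall g, g \in gs ->
          (`| pairing nu g - pairing mu g | < delta%:E)%E) ->
    S mu.

Definition Rfun {N n d} (p : R) (lam : {measure set (borel_rV N) -> \bar R})
    (O : set (borel_rV N)) (A : 'I_N -> 'M[R]_(n, d))
    (F : 'rV[R]_n -> \bar R) (xi : 'rV[R]_n) : \bar R :=
  ereal_inf [set (\int[nu]_z F ((z : 'rV[R]_n) + xi)%R)%E | nu in Hp0 p lam O A].

Definition pmoment {n} (p : R) (mu : probability (borel_rV n) R) : \bar R :=
  (\int[mu]_z ((enorm z) `^ p)%:E)%E.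

End Setting.

(* Main.v *)
Require Import Defs.
From HB Require Import structures.
From mathcomp Require Import all_boot all_order all_algebra.
From mathcomp Require Import all_classical all_reals all_analysis.
From mathcomp Require Import lra measurable_realfun.

Import Order.TTheory GRing.Theory Num.Theory.
Import numFieldNormedType.Exports.
Local Open Scope classical_set_scope.
Local Open Scope ring_scope.

Section Approx.
Context {R : realType} {n : nat} (F : 'rV[R]_n -> \bar R).
Hypothesis F0 : forall z, (0 <= F z)%E.

Definition phi (k : nat) (y : 'rV[R]_n) : R := fine (Order.min (k%:R)%:E (F y)).

Lemma phiE k y : (phi k y)%:E = Order.min (k%:R)%:E (F y).
Proof.
rewrite /phi; have := F0 y; case: (F y) => [r| |] //= r0.
- by rewrite -EFin_min.
- by rewrite minEle leey.
Qed.

Lemma phi_ge0 k y : 0 <= phi k y.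
Proof. by rewrite -lee_fin phiE le_min lee_fin ler0n F0. Qed.

Lemma phi_lek k y : phi k y <= k%:R.
Proof. by rewrite -lee_fin phiE ge_min lexx. Qed.

Lemma phi_leF k y : ((phi k y)%:E <= F y)%E.
Proof. by rewrite phiE ge_min lexx orbT. Qed.

Lemma phi_nd k y : phi k y <= phi k.+1 y.
Proof. by rewrite -lee_fin !phiE le_min !ge_min lee_fin ler_nat lexx leqnSn !orbT. Qed.

Definition hh (k : nat) (z y : 'rV[R]_n) : R :=
  Num.min k%:R (phi k y + k%:R * `|z - y|).

Lemma hh_ge0 k z y : 0 <= hh k z y.
Proof.
by rewrite /hh le_min ler0n /= addr_ge0 ?phi_ge0 // mulr_ge0.
Qed.

Definition gg (k : nat) (z : 'rV[R]_n) : R := inf (range (hh k z)).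

Lemma gg_le k z y : gg k z <= hh k z y.
Proof.
apply: ge_inf; last by exists y.
by exists 0 => _ [w _ <-]; exact: hh_ge0.
Qed.

Lemma gg_ge k z c : (forall y, c <= hh k z y) -> c <= gg k z.
Proof.
move=> H; apply: lb_le_inf; first by exists (hh k z 0), 0.
by move=> _ [w _ <-].
Qed.

Lemma gg_ge0 k z : 0 <= gg k z.
Proof. by apply: gg_ge => y; exact: hh_ge0. Qed.

Lemma gg_lek k z : gg k z <= k%:R.
Proof. by apply: (le_trans (gg_le k z z)); rewrite ge_min lexx. Qed.

Lemma gg_lephi k z : gg k z <= phi k z.
Proof.
apply: (le_trans (gg_le k z z)); rewrite /hh subrr normr0 mulr0 addr0.
by rewrite ge_min lexx orbT.
Qed.

Lemma gg_leF k z : ((gg k z)%:E <= F z)%E.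
Proof. by apply: le_trans (phi_leF k z); rewrite lee_fin gg_lephi. Qed.

Lemma gg_nd k z : gg k z <= gg k.+1 z.
Proof.
apply: gg_ge => y; apply: (le_trans (gg_le k z y)).
rewrite /hh le_min !ge_min ler_nat leqnSn /=; apply/orP; right.
rewrite lerD ?phi_nd // ler_wpM2r // ?ler_nat //.
Qed.

Lemma min_lip (k u v c : R) : u <= v + c -> 0 <= c ->
  Num.min k u <= Num.min k v + c.
Proof.
move=> uv c0; have [hv|hv] := leP k v.
- by rewrite ge_min lerDl c0.
- by rewrite ge_min uv orbT.
Qed.


Lemma hh_lip k z z' y : hh k z y <= hh k z' y + k%:R * `|z - z'|.
Proof.
apply: min_lip; last by rewrite mulr_ge0.
rewrite -addrA lerD2l -mulrDr ler_wpM2l // [X in _ <= X]addrC.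
exact: ler_distD.
Qed.

Lemma gg_lip k z z' : gg k z <= gg k z' + k%:R * `|z - z'|.
Proof.
rewrite -lerBlDr; apply: gg_ge => y; rewrite lerBlDr.
exact: le_trans (gg_le k z y) (hh_lip k z z' y).
Qed.

Lemma gg_cont k : continuous (gg k).
Proof.
move=> x; apply/(@cvgrPdist_lt _ _ _ (nbhs x)) => e e0.
apply/nbhs_ballP; exists (e / (k%:R + 1)).
  by rewrite /= divr_gt0 // ltr_wpDl.
move=> t /=; rewrite -ball_normE /ball_ /= => hxt.
have hk : 0 < k%:R + 1 :> R by rewrite ltr_wpDl.
have h1 : k%:R * `|x - t| < e.
  apply: (le_lt_trans (y := (k%:R + 1) * `|x - t|)).
    by rewrite ler_wpM2r // lerDl.
  by rewrite -ltr_pdivlMl // mulrC.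
have H1 := gg_lip k t x; have H2 := gg_lip k x t.
rewrite distrC in H1.
rewrite (le_lt_trans _ h1) // ler_norml; apply/andP; split; lra.
Qed.

Hypothesis Flsc : lower_semicontinuous F.

Lemma gg_big z a : (a%:E < F z)%E -> exists k, a <= gg k z.
Proof.
move=> aF; have [a0|a0] := leP a 0.
  by exists 0%N; exact: le_trans a0 (gg_ge0 0 z).
have [V Vz VF] := Flsc _ _ aF.
have [r r0 rV] := (nbhs_ballP (z : 'rV[R]_n) V).1 Vz.
pose k := (Num.trunc (a + a / r)).+1.
have hk : a + a / r < k%:R by exact: truncnS_gt.
have ka : a <= k%:R.
  by apply: ltW; apply: le_lt_trans hk; rewrite lerDl divr_ge0 // ltW.
have kr : a <= k%:R * r.
  rewrite -ler_pdivrMr //; apply: ltW; apply: le_lt_trans hk.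
  by rewrite lerDr ltW.
exists k; apply: gg_ge => y; rewrite /hh le_min ka /=.
have [yb|yb] := ltP `|z - y| r.
  have : V y by apply: rV; rewrite -ball_normE /ball_ /=.
  move=> /VF aFy; apply: ler_wpDr; first by rewrite mulr_ge0.
  by rewrite -lee_fin phiE le_min lee_fin ka (ltW aFy).
apply: ler_wpDl; first exact: phi_ge0.
by apply: le_trans kr _; rewrite ler_wpM2l.
Qed.


Lemma gg_cvg z : (fun k => (gg k z)%:E) @ \oo --> F z.
Proof.
have nd : nondecreasing_seq (fun k => (gg k z)%:E).
  by apply/nondecreasing_seqP => k; rewrite lee_fin gg_nd.
have -> : F z = ereal_sup (range (fun k => (gg k z)%:E)).
  apply/eqP; rewrite eq_le; apply/andP; split; last first.
    by apply: ge_ereal_sup => _ [k _ <-]; exact: gg_leF.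
  have ub k : ((gg k z)%:E <= ereal_sup (range (fun k => (gg k z)%:E)))%E.
    by apply: ereal_sup_ubound; exists k.
  move: (ub 0%N); have := F0 z.
  case Fz: (F z) => [f| |] //= f0.
  - move=> _; apply/lee_addgt0Pr => e e0.
    have [k hk] : exists k, f - e <= gg k z.
      by apply: gg_big; rewrite Fz lte_fin ltrBlDr ltrDl.
    apply: le_trans (leeD2r _ (ub k)).
    by rewrite -EFinD lee_fin -lerBlDr.
  - case: (ereal_sup _) (ub) => [r| |] //= ubr _.
    + have [k hk] : exists k, r + 1 <= gg k z by apply: gg_big; rewrite Fz ltry.
      have := ubr k; rewrite lee_fin => /(le_trans hk).
      by rewrite -lerBrDl subrr ler10.
exact: ereal_nondecreasing_cvgn.
Qed.

End Approx.

Lemma cont_meas {R : realType} {n : nat} (f : 'rV[R]_n -> R) :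
  continuous f -> measurable_fun (setT : set (borel_rV n)) (f : borel_rV n -> R).
Proof.
move=> /continuousP cf; apply: (measurability _ (measurable_realfun.RGenOpens.measurableE R)).
move=> _ [_ [a [b ->] <-]]; rewrite setTI.
apply: sub_sigma_algebra; apply: cf; exact: interval_open.
Qed.



Section Trans.
Context {R : realType} {n : nat} (F : 'rV[R]_n -> \bar R).
Hypothesis F0 : forall z, (0 <= F z)%E.
Hypothesis Flsc : lower_semicontinuous F.
Variable xi : 'rV[R]_n.

Definition G k (z : 'rV[R]_n) : R := gg F k (z + xi).

Lemma G_cont k : continuous (G k).
Proof.
have -> : G k = gg F k \o (fun x => x + xi) by [].
move=> z; apply: continuous_comp; last exact: (gg_cont F F0 k (z + xi)).
exact: (cvgD (@cvg_id _ _) (cvg_cst xi)).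
Qed.

Lemma G_meas k : measurable_fun (setT : set (borel_rV n)) (G k : borel_rV n -> R).
Proof. by apply: cont_meas; exact: G_cont. Qed.

Lemma G_ge0 k z : 0 <= G k z.
Proof. exact: gg_ge0. Qed.

Lemma G_lek k z : G k z <= k%:R.
Proof. exact: gg_lek. Qed.

Lemma G_nd z : nondecreasing_seq (fun k => (G k z)%:E).
Proof. by apply/nondecreasing_seqP => k; rewrite lee_fin gg_nd. Qed.

Lemma G_cvg z : (fun k => (G k z)%:E) @ \oo --> F ((z : 'rV[R]_n) + xi).
Proof. exact: gg_cvg. Qed.

Lemma Fxi_meas : measurable_fun (setT : set (borel_rV n))
  ((fun z : borel_rV n => F ((z : 'rV[R]_n) + xi)) : borel_rV n -> \bar R).
Proof.
apply: (@emeasurable_fun_cvg _ _ _ setT (fun k (z : borel_rV n) => (G k z)%:E)).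
  by move=> k; apply/measurable_EFinP; exact: G_meas.
by move=> z _; exact: G_cvg.
Qed.

Variable nu : probability (@borel_rV R n) R.

Lemma int_nd : nondecreasing_seq (fun k => \int[nu]_z (G k z)%:E)%E.
Proof.
move=> a b ab; apply: ge0_le_integral => //.
- by move=> z _; rewrite lee_fin G_ge0.
- by apply/measurable_EFinP; exact: G_meas.
- by apply/measurable_EFinP; exact: G_meas.
- by move=> z _; exact: G_nd.
Qed.

Lemma int_lim : (\int[nu]_z F ((z : 'rV[R]_n) + xi) =
  limn (fun k => \int[nu]_z (G k z)%:E))%E.
Proof.
rewrite -monotone_convergence //.
- apply: eq_integral => z _; apply/esym/cvg_lim => //; exact: G_cvg.
- by move=> k; apply/measurable_EFinP; exact: G_meas.
- by move=> k z _; rewrite lee_fin G_ge0.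
- by move=> z _; exact: G_nd.
Qed.

Lemma int_cvg : cvgn (fun k => \int[nu]_z (G k z)%:E)%E.
Proof. exact/ereal_nondecreasing_is_cvgn/int_nd. Qed.

Lemma int_G_le k : (\int[nu]_z (G k z)%:E <= \int[nu]_z F ((z : 'rV[R]_n) + xi))%E.
Proof.
rewrite int_lim; apply: lime_ge; first exact: int_cvg.
by near=> j; apply: int_nd; near: j; exists k.
Unshelve. all: by end_near.
Qed.

Lemma pairing_fin k : pairing nu (G k) = (fine (pairing nu (G k)))%:E.
Proof.
rewrite fineK // ge0_fin_numE; last by apply: integral_ge0 => z _; rewrite lee_fin G_ge0.
apply: (@le_lt_trans _ _ (\int[nu]_z (cst (k%:R)%:E) z)%E).
  apply: ge0_le_integral => //.
  - by move=> z _; rewrite lee_fin G_ge0.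
  - by apply/measurable_EFinP; exact: G_meas.
  - by move=> z _; rewrite lee_fin G_lek.
rewrite integral_cst //.
apply: (@le_lt_trans _ _ ((k%:R)%:E * 1)%E); last by rewrite mule1 ltry.
apply: lee_wpmul2l; first by rewrite lee_fin.
exact: probability_le1.
Qed.

End Trans.

Lemma G_inE {R : realType} {n : nat} (F : 'rV[R]_n -> \bar R) xi (p : R) k :
  (forall z, (0 <= F z)%E) -> 1 < p -> Defs.inE p (G F xi k).
Proof.
move=> F0 p1; split; first exact: G_cont.
exists 0 => e e0; exists (Num.max 1 (k%:R / e)) => z.
rewrite gt_max => /andP[t1 tk].
set t := enorm z in t1 tk *.
have tp : t <= t `^ p by apply: le1r_powR; lra.
have Gz0 := G_ge0 F F0 xi k z; have Gzk := G_lek F F0 xi k z.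
have ket : k%:R < e * t by rewrite mulrC -ltr_pdivrMr.
have P0 : 0 < 1 + t `^ p by rewrite ltr_pwDl // powR_ge0.
rewrite subr0 ger0_norm ?divr_ge0 ?(ltW P0) //.
rewrite ltr_pdivrMr //.
have : e * t <= e * t `^ p by rewrite ler_wpM2l // ltW.
nra.
Qed.


Theorem lemma3p4 (R : realType) (N n d : nat) (p : R)
  (lam : {measure set (borel_rV N) -> \bar R})
  (O : set (borel_rV N)) (A : 'I_N -> 'M[R]_(n, d))
  (F : 'rV[R]_n -> \bar R) (eps : R) (M : nat) (CM : R) :
  1 < p ->
  is_lebesgue lam ->
  open (O : set 'rV[R]_N) -> bounded_set (O : set 'rV[R]_N) ->
  lam (boundary (O : set 'rV[R]_N)) = 0%E ->
  constant_rank A ->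
  lower_semicontinuous F ->
  (forall z, (0 <= F z)%E) ->
  (exists C : R, 0 < C /\ forall z, ((C * enorm z `^ p)%:E <= F z)%E) ->
  0 < eps ->
  let Rx := Rfun p lam O A F in
  let OmegaM := [set xi : 'rV[R]_n | enorm xi < M%:R /\ (Rx xi <= M%:R%:E)%E] in
  0 < CM ->
  (forall (mu : probability (borel_rV n) R) (xi : 'rV[R]_n),
     Hp0 p lam O A mu -> OmegaM xi ->
     (\int[mu]_z F ((z : 'rV[R]_n) + xi)%R <= eps%:E + Rx xi)%E ->
     (pmoment p mu <= CM%:E)%E) ->
  let YM := [set mu | Hp0 p lam O A mu /\ (pmoment p mu <= CM%:E)%E] in
  forall xi, OmegaM xi ->
    let Fxi := [set mu | Hp0 p lam O A mu /\
                         (\int[mu]_z F ((z : 'rV[R]_n) + xi)%R <= eps%:E + Rx xi)%E] in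
    Fxi !=set0 /\ Fxi `<=` YM /\ weakstar_closed_in p YM Fxi.
Proof.
move=> p1 _ _ _ _ _ Flsc F0 _ eps0 Rx OmegaM CM0 Hmom YM xi [xiM RxM] Fxi.
have Rx0 : (0 <= Rx xi)%E.
  apply: le_ereal_inf_tmp => _ [nu _ <-]; apply: integral_ge0 => z _; exact: F0.
have [r Rr] : exists r, Rx xi = r%:E.
  by move: Rx0 RxM; case: (Rx xi) => [r| |] //= _ _; exists r.
split.
  have h : (Rx xi < eps%:E + Rx xi)%E by rewrite Rr -EFinD lte_fin ltrDr.
  have [_ [nu Hnu <-] hlt] := ereal_inf_lt h.
  by exists nu; split => //; exact: ltW.
split.
  move=> mu [Hmu Hle]; split => //.
  exact: (Hmom mu xi Hmu (conj xiM RxM) Hle).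
move=> mu [Hmu _] Hcl; split => //.
rewrite (int_lim F F0 Flsc xi mu).
apply: lime_le; first exact: int_cvg.
apply: nearW => k.
apply/lee_addgt0Pr => e e0.
have gin : forall g, g \in [:: G F xi k] -> Defs.inE p g.
  by move=> g; rewrite mem_seq1 => /eqP ->; exact: G_inE.
have [nu [Hnu Hnule] hclose] := Hcl [:: G F xi k] e gin e0.
have := hclose (G F xi k) (mem_head _ _).
rewrite (pairing_fin F F0 xi nu k) (pairing_fin F F0 xi mu k) => hc.
set a := fine (pairing nu (G F xi k)) in hc.
set b := fine (pairing mu (G F xi k)) in hc.
have hb : b <= a + e.
  move: hc; rewrite -EFinB /= lte_fin ltr_norml => /andP[h1 h2]; lra.
have Ea : pairing nu (G F xi k) = a%:E by rewrite /a -pairing_fin.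
have Eb : pairing mu (G F xi k) = b%:E by rewrite /b -pairing_fin.
change (pairing mu (G F xi k) <= eps%:E + Rx xi + e%:E)%E.
rewrite Eb; apply: (@le_trans _ _ (a%:E + e%:E)%E); first by rewrite -EFinD lee_fin.
apply: leeD2r; rewrite -Ea; apply: le_trans Hnule; exact: int_G_le.
Qed.
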